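(* Let $(N,v)$ be a TU game and $\delta>0$. Following the Coalition Proposal algorithm (described in the context) for $(N,v)$, if the environment state at some iteration lies in $\Omega(v)$, then the environment state at every subsequent iteration lies in $\Omega(v)$.
   Context: A TU game is a pair $(N,v)$ with $N=\{1,\dots,n\}$ and $v:2^N\to\mathbb{R}$, $v(\emptyset)=0$. Coalition Proposal algorithm with step $\delta$: each player $i$ holds an aspiration $a_i$ and a coalition state $C_i\subseteq N$. In each iteration: a player $i\in N$ is activated at random; $i$ chooses at random a set $S\subseteq N\setminus\{i\}$ and proposes $J=S\cup\{i\}$. If $\sum_{j\in J}a_j+\delta\le v(J)$ (success): $a_i\leftarrow a_i+\delta$; then for every $j\in J$ and every $k\in C_j$ with $k\neq j$, set $C_k\leftarrow\emptyset$; then set $C_j\leftarrow J$ for all $j\in J$. Otherwise (failure): if $C_i=\emptyset$, set $a_i\leftarrow\max(v(\{i\}),a_i-\delta)$. Finally, if $a_i=v(\{i\})$ and $C_i=\emptyset$, set $C_i\leftarrow\{i\}$. The environment state is $(\mathbf{a},\mathcal{C})$ with $\mathbf{a}=(a_1,\dots,a_n)$ and $\mathcal{C}=\{C_i:i\in N\}$ the set of (nonempty) formed coalitions. A feasible environment state is a pair $(\mathbf{a},\mathcal{C})$ with $\mathbf{a}\in\mathbb{R}^n$ and $\mathcal{C}$ a set of pairwise disjoint subsets of $N$ such that $a_i\ge v(\{i\})$ for all $i\in N$ and $\sum_{i\in S}a_i\le v(S)$ for all $S\in\mathcal{C}$. $\Omega(v)$ is the set of feasible environment states. *)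

(* Defs.v *)
From HB Require Import structures.
From mathcomp Require Import all_boot all_order all_algebra.
Set Implicit Arguments. Unset Strict Implicit. Unset Printing Implicit Defensive.
Import Order.TTheory GRing.Theory Num.Theory.
Local Open Scope ring_scope.

(* Players N = 'I_n; a TU game is v : {set 'I_n} -> R with v set0 = 0. *)

Record cp_state (R : realFieldType) (n : nat) := CPState {
  asp : 'I_n -> R;
  coal : 'I_n -> {set 'I_n}
}.

Section CP.
Variables (R : realFieldType) (n : nat).
Implicit Types (v : {set 'I_n} -> R) (st : cp_state R n).

(* Coalition update on success with proposal J:
   first C_k <- empty for every j in J and k in C_j with k <> j,
   then C_j <- J for all j in J. *)
Definition success_coal (C : 'I_n -> {set 'I_n}) (J : {set 'I_n}) :
    'I_n -> {set 'I_n} :=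
  fun k => if k \in J then J
           else if [exists j in J, (k \in C j) && (k != j)] then set0
           else C k.

Definition cp_step v (delta : R) (i : 'I_n) (S : {set 'I_n}) st : cp_state R n :=
  let a := asp st in
  let C := coal st in
  let J := i |: S in
  let '(a', C') :=
    if \sum_(j in J) a j + delta <= v J then
      ((fun k => if k == i then a i + delta else a k), success_coal C J)
    else
      ((fun k => if (k == i) && (C i == set0)
                 then Num.max (v [set i]) (a i - delta) else a k), C) in
  let C'' := fun k => if (k == i) && (a' i == v [set i]) && (C' i == set0)
                      then [set i] else C' k in
  CPState a' C''.

Definition formed (C : 'I_n -> {set 'I_n}) : {set {set 'I_n}} :=
  [set C i | i in [set: 'I_n]] :\ set0.

Definition feasible v (a : 'I_n -> R) (calC : {set {set 'I_n}}) : Prop :=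
  (forall i, v [set i] <= a i) /\
  (forall S T, S \in calC -> T \in calC -> S != T -> [disjoint S & T]) /\
  (forall S, S \in calC -> \sum_(i in S) a i <= v S).

Definition in_Omega v st : Prop := feasible v (asp st) (formed (coal st)).

(* Well-formed coalition states, as produced by the algorithm
   (e.g. the initialization C_i = empty for all i): every C_i is empty or
   contains i and is the common coalition state of all its members. *)
Definition coal_consistent (C : 'I_n -> {set 'I_n}) : Prop :=
  forall i, C i = set0 \/ (i \in C i /\ forall k, k \in C i -> C k = C i).

End CP.

(* Main.v *)
Require Import Defs.
From HB Require Import structures.
From mathcomp Require Import all_boot all_order all_algebra.
Import Order.TTheory GRing.Theory Num.Theory.
Local Open Scope ring_scope.

Section Aux.
Variables (R : realFieldType) (n : nat).

Lemma cons_eq (C : 'I_n -> {set 'I_n}) k l m :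
  coal_consistent C -> m \in C k -> m \in C l -> C k = C l.
Proof.
move=> hc hk hl.
have ek : C m = C k.
  case: (hc k) => [e|[_ h]]; first by rewrite e inE in hk.
  exact: h.
have el : C m = C l.
  case: (hc l) => [e|[_ h]]; first by rewrite e inE in hl.
  exact: h.
by rewrite -ek el.
Qed.

Lemma cons_self (C : 'I_n -> {set 'I_n}) k m :
  coal_consistent C -> m \in C k -> k \in C k /\ C m = C k.
Proof.
move=> hc hk; case: (hc k) => [e|[h1 h2]]; first by rewrite e inE in hk.
by split => //; apply: h2.
Qed.

Arguments cons_eq {C k l m}.
Arguments cons_self {C k m}.

Definition good (v : {set 'I_n} -> R) (st : cp_state R n) : Prop :=
  (forall i, v [set i] <= asp st i) /\
  (forall k, \sum_(m in coal st k) asp st m <= v (coal st k)).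

Lemma feas_good v st : v set0 = 0 -> coal_consistent (coal st) ->
  in_Omega v st <-> good v st.
Proof.
move=> hv0 hc; split.
- case=> [h1 [h2 h3]]; split => // k.
  have [e|ne] := eqVneq (coal st k) set0; first by rewrite e big_set0 hv0.
  apply: h3; rewrite /formed in_setD1 ne /=; apply: imset_f; by rewrite inE.
- case=> [h1 h3]; split => //; split.
  + move=> S T; rewrite /formed !in_setD1 => /andP[_ /imsetP[k _ ->]]
      /andP[_ /imsetP[l _ ->]] ne.
    rewrite disjoint_subset; apply/subsetP => x hx; rewrite inE; apply/negP => hy.
    by move/eqP: ne => ne; apply: ne; apply: (cons_eq hc hx hy).
  + move=> S; rewrite /formed in_setD1 => /andP[_ /imsetP[k _ ->]]; exact: h3.
Qed.

Lemma succ_cons (C : 'I_n -> {set 'I_n}) J :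
  coal_consistent C -> coal_consistent (success_coal C J).
Proof.
move=> hc k; rewrite /success_coal.
case: ifP => kJ.
  by right; split => // m ->.
case: ifP => hex; first by left.
case: (hc k) => [->|[kk hk]]; first by left.
right; split => // m hm.
have ekm := hk m hm.
have mJ : (m \in J) = false.
  apply/negP => mJ; move/negbT/negP: hex => hex; apply: hex; apply/exists_inP; exists m => //.
  rewrite ekm kk /=; apply/eqP => e; by rewrite e mJ in kJ.
rewrite mJ.
case: ifP => hex2; last exact: ekm.
case/exists_inP: hex2 => j jJ /andP[mj _].
exfalso; move/negbT/negP: hex => hex; apply: hex; apply/exists_inP; exists j => //.
have [jj ej] := cons_self hc mj.
have e : C j = C k by rewrite -ej ekm.
rewrite e kk /=; apply/eqP => e'; by rewrite e' jJ in kJ.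
Qed.

Lemma cons_ext (C1 C2 : 'I_n -> {set 'I_n}) :
  (forall k, C1 k = C2 k) -> coal_consistent C1 -> coal_consistent C2.
Proof.
move=> e hc k; rewrite -!e; case: (hc k) => [h|[h1 h2]]; [by left|right].
by split => // m hm; rewrite -e; apply: h2.
Qed.

Lemma step_inv v delta i S st : v set0 = 0 -> 0 < delta ->
  coal_consistent (coal st) ->
  coal_consistent (coal (cp_step v delta i S st)) /\
  (good v st -> good v (cp_step v delta i S st)).
Proof.
move=> hv0 hd hc; rewrite /cp_step.
case: st hc => a C /= hc.
have iJ : i \in i |: S by rewrite setU11.
case: ifP => hJ /=.
- have e0 : (success_coal C (i |: S) i == set0) = false.
    rewrite /success_coal iJ; apply/negbTE/set0Pn; by exists i.
  split.
    apply: (@cons_ext (success_coal C (i |: S))); last exact: succ_cons.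
    by move=> k; rewrite e0 andbF.
  case=> /= hl hs; split => /= k.
    case: eqP => [->|_]; last exact: hl.
    by apply: le_trans (hl i) _; rewrite lerDl ltW.
  rewrite e0 andbF /success_coal.
  case: ifP => kJ.
    rewrite (bigD1 i) //= eqxx.
    rewrite (eq_bigr a); last by move=> m /andP[_ /negbTE ->].
    rewrite (bigD1 i) //= in hJ.
    by rewrite addrAC.
  case: ifP => hex; first by rewrite big_set0 hv0.
  rewrite (eq_bigr a); last first.
    move=> m hm; case: eqP => // emi; exfalso.
    rewrite emi in hm.
    have [kk eik] := cons_self hc hm.
    move/negbT/negP: hex; apply; apply/exists_inP; exists i => //.
    rewrite eik kk /=; apply/eqP => e; by rewrite e iJ in kJ.
  exact: hs.
- split.
    move=> k /=.
    case: ifP => [h|h].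
      have ki : k = i by move: h => /andP[/andP[/eqP -> _] _].
      subst k; right; split; first by rewrite set11.
      move=> m; rewrite in_set1 => /eqP ->; by rewrite h.
    case: (hc k) => [->|[kk hk]]; [by left|right].
    split => // m hm.
    case: ifP => [/andP[/andP[/eqP em _] /eqP hCi]|_]; last exact: hk.
    exfalso; rewrite em in hm; rewrite (hk i hm) in hCi.
    by rewrite hCi inE in kk.
  case=> /= hl hs; split => /= k.
    case: ifP => [/andP[/eqP -> _]|_]; last exact: hl.
    by rewrite le_max lexx.
  case: ifP => [h|h].
    move: h => /andP[/andP[_ /eqP e] _].
    by rewrite big_set1 e.
  rewrite (eq_bigr a); last first.
    move=> m hm; case: ifP => // /andP[/eqP emi /eqP hCi]; exfalso.
    rewrite emi in hm.
    have [kk eik] := cons_self hc hm.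
    by rewrite -eik hCi inE in kk.
  exact: hs.
Qed.

End Aux.

Theorem proposition3 (R : realFieldType) (n : nat) (v : {set 'I_n} -> R)
    (hv0 : v set0 = 0) (delta : R) (hdelta : 0 < delta)
    (run : nat -> cp_state R n)
    (hinit : coal_consistent (coal (run 0%N)))
    (hrun : forall t : nat, exists (i : 'I_n) (S : {set 'I_n}),
        S \subset [set~ i] /\ run t.+1 = cp_step v delta i S (run t))
    (t : nat) :
  in_Omega v (run t) -> forall s : nat, (t <= s)%N -> in_Omega v (run s).
Proof.
have hcons : forall s, coal_consistent (coal (run s)).
  elim => [|s ih]; first exact: hinit.
  have [i [S [_ ->]]] := hrun s.
  exact: (proj1 (@step_inv R n v delta i S (run s) hv0 hdelta ih)).
move=> hO s hts; apply/(@feas_good R n v (run s) hv0 (hcons s)).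
have hg := proj1 (@feas_good R n v (run t) hv0 (hcons t)) hO.
elim: s hts => [|s ih] hts.
  by move: hts; rewrite leqn0 => /eqP <-.
move: hts; rewrite leq_eqVlt => /orP[/eqP <- //|hlt].
have [i [S [_ ->]]] := hrun s.
exact: (proj2 (@step_inv R n v delta i S (run s) hv0 hdelta (hcons s)) (ih hlt)).
Qed.
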